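(* For every integer $w\geq 3$, $$\sum_{i=1}^{w-2}\sigma(w-i,i)=(w-1)\,\lambda(w).$$
   Context: For integers $t\geq 1$ and $n\geq 1$ let $S_n^{(t)}=\sum_{k=1}^{n}\frac{1}{(2k-1)^t}$, and for integers $s\geq 2$, $t\geq 1$ let $\sigma(s,t)=\sum_{n\geq 1}\frac{S_n^{(t)}}{n^s}$. For real $s>1$, $\lambda(s)=\sum_{n\geq 1}\frac{1}{(2n-1)^s}=(1-2^{-s})\zeta(s)$. *)

(* Defs.v *)
From Stdlib Require Import Reals.
From Coquelicot Require Import Coquelicot.
Open Scope R_scope.

Definition S_odd (t n : nat) : R :=
  sum_n_m (fun k => / (2 * INR k - 1) ^ t) 1 n.

(* sigma(s,t) = sum_{n>=1} S_n^{(t)} / n^s ; Coquelicot's Series starts at 0,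
   so index shift n -> n+1. *)
Definition sigma_odd (s t : nat) : R :=
  Series (fun n => S_odd t (S n) / (INR (S n)) ^ s).

Definition lambda (s : nat) : R :=
  Series (fun n => / (2 * INR (S n) - 1) ^ s).

(* Main.v *)
Require Import Defs.
From Stdlib Require Import Reals.
From Stdlib Require Import Lra Lia Arith.
From Coquelicot Require Import Coquelicot.
Open Scope R_scope.

Ltac fixeq := match goal with |- ?a = ?b => change (@eq R a b) end.


Lemma sSm (f : nat -> R) a b : (a <= S b)%nat -> sum_n_m f a (S b) = sum_n_m f a b + f (S b).
Proof. intros; rewrite sum_n_Sm; auto. Qed.

Lemma sZ (f : nat -> R) a b : (b < a)%nat -> sum_n_m f a b = 0.
Proof. intros; rewrite sum_n_m_zero; auto. Qed.

Lemma sPlus (f g : nat -> R) a b : sum_n_m (fun k => f k + g k) a b = sum_n_m f a b + sum_n_m g a b.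
Proof. apply (sum_n_m_plus f g). Qed.

Lemma sMl (c : R) (f : nat -> R) a b : sum_n_m (fun k => c * f k) a b = c * sum_n_m f a b.
Proof. apply (sum_n_m_mult_l c f). Qed.

Lemma sMr (c : R) (f : nat -> R) a b : sum_n_m (fun k => f k * c) a b = sum_n_m f a b * c.
Proof. apply (sum_n_m_mult_r c f). Qed.

Lemma sExt (f g : nat -> R) a b : (forall k, (a <= k <= b)%nat -> f k = g k) -> sum_n_m f a b = sum_n_m g a b.
Proof. apply sum_n_m_ext_loc. Qed.

Lemma s0 (f : nat -> R) a b : (forall k, (a <= k <= b)%nat -> f k = 0) -> sum_n_m f a b = 0.
Proof. intros H. rewrite (sExt f (fun _ => 0)) by auto. rewrite sum_n_m_const; apply Rmult_0_r. Qed.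

Lemma sLe (f g : nat -> R) a b : (forall k, (a <= k <= b)%nat -> f k <= g k) -> sum_n_m f a b <= sum_n_m g a b.
Proof.
  intros H. induction b.
  - destruct a. rewrite !sum_n_n; apply H; lia. rewrite !sZ; lia || lra.
  - destruct (le_lt_dec a (S b)).
    + destruct (Nat.eq_dec a (S b)). subst. rewrite !sum_n_n; apply H; lia.
      rewrite !sSm by lia. assert (f (S b) <= g (S b)) by (apply H; lia).
      assert (sum_n_m f a b <= sum_n_m g a b) by (apply IHb; intros; apply H; lia). lra.
    + rewrite !sZ; lia || lra.
Qed.

Lemma sNonneg (f : nat -> R) a b : (forall k, (a <= k <= b)%nat -> 0 <= f k) -> 0 <= sum_n_m f a b.
Proof. intros H. rewrite <- (s0 (fun _ => 0) a b) by auto. apply sLe; auto. Qed.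

Lemma sPoint (f : nat -> R) a b j : (a <= j <= b)%nat ->
  (forall k, (a <= k <= b)%nat -> k <> j -> f k = 0) -> sum_n_m f a b = f j.
Proof.
  intros Hj H. rewrite (sum_n_m_Chasles f a j b) by lia.
  change (sum_n_m f a j + sum_n_m f (S j) b = f j).
  rewrite (s0 f (S j) b) by (intros; apply H; lia).
  destruct j. - assert (a = 0%nat) by lia; subst; rewrite sum_n_n; ring.
  - destruct (Nat.eq_dec a (S j)). subst; rewrite sum_n_n; ring.
    rewrite sSm by lia. rewrite (s0 f a j) by (intros; apply H; lia). ring.
Qed.

Lemma sPointLe (f : nat -> R) a b j : (a <= j <= b)%nat ->
  (forall k, (a <= k <= b)%nat -> 0 <= f k) -> f j <= sum_n_m f a b.
Proof.
  intros Hj H. apply Rle_trans with (sum_n_m (fun k => if Nat.eq_dec k j then f j else 0) a b).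
  - rewrite (sPoint _ a b j); [|assumption|intros k Hk Hn; destruct (Nat.eq_dec k j); [lia|auto]].
    destruct (Nat.eq_dec j j); [lra|lia].
  - apply sLe. intros k Hk. destruct (Nat.eq_dec k j). subst; lra. apply H; auto.
Qed.

Lemma sSwap (f : nat -> nat -> R) a b c d :
  sum_n_m (fun i => sum_n_m (fun k => f i k) c d) a b = sum_n_m (fun k => sum_n_m (fun i => f i k) a b) c d.
Proof.
  induction d.
  - destruct c. rewrite sum_n_n. apply sExt; intros; rewrite sum_n_n; auto.
    rewrite (sZ _ (S c) 0) by lia. apply s0; intros; apply sZ; lia.
  - destruct (le_lt_dec c (S d)).
    + destruct (Nat.eq_dec c (S d)). subst. rewrite sum_n_n. apply sExt; intros; rewrite sum_n_n; auto.
      rewrite sSm by lia. rewrite <- IHd. rewrite <- sPlus. apply sExt; intros; rewrite sSm by lia; auto.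
    + rewrite (sZ _ c (S d)) by lia. apply s0; intros; apply sZ; lia.
Qed.

Lemma sTri (f : nat -> nat -> R) N :
  sum_n_m (fun n => sum_n_m (fun k => f n k) 1 n) 1 N = sum_n_m (fun k => sum_n_m (fun n => f n k) k N) 1 N.
Proof.
  induction N.
  - rewrite !sZ; lia || lra.
  - rewrite !sSm by lia. rewrite IHN. rewrite (sZ _ (S N) N) by lia.
    rewrite (sExt (fun k => sum_n_m (fun n => f n k) k (S N)) (fun k => sum_n_m (fun n => f n k) k N + f (S N) k))
      by (intros; rewrite sSm by lia; auto).
    rewrite sPlus. change (fun k : nat => f (S N) k) with (f (S N)). lra.
Qed.

Lemma sRev0 (f : nat -> R) n : sum_n_m f 0 n = sum_n_m (fun k => f (n - k)%nat) 0 n.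
Proof.
  revert f; induction n; intros f.
  - rewrite !sum_n_n. auto.
  - rewrite sum_Sn_m by lia. rewrite <- sum_n_m_S. rewrite IHn. rewrite sSm by lia.
    replace (S n - S n)%nat with 0%nat by lia. change (f 0%nat + sum_n_m (fun k : nat => f (S (n - k))) 0 n =
     sum_n_m (fun k : nat => f (S n - k)%nat) 0 n + f 0%nat).
    rewrite (sExt (fun k => f (S n - k)%nat) (fun k => f (S (n - k)))) by (intros; f_equal; lia). ring.
Qed.

Lemma sRev1 (f : nat -> R) n : sum_n_m f 1 n = sum_n_m (fun k => f (S n - k)%nat) 1 n.
Proof.
  destruct n. rewrite !sZ; lia || lra.
  rewrite <- !sum_n_m_S. rewrite sRev0. apply sExt; intros; f_equal; lia.
Qed.

Lemma sLim (u : nat -> nat -> R) (l : nat -> R) a b :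
  (forall i, (a <= i <= b)%nat -> is_lim_seq (u i) (l i)) ->
  is_lim_seq (fun K => sum_n_m (fun i => u i K) a b) (sum_n_m l a b).
Proof.
  intros H. induction b.
  - destruct a. rewrite sum_n_n. apply (is_lim_seq_ext (u 0%nat)). intros; rewrite sum_n_n; auto. apply H; lia.
    rewrite sZ by lia. apply (is_lim_seq_ext (fun _ => 0)). intros; rewrite sZ; lia || auto. apply is_lim_seq_const.
  - destruct (le_lt_dec a (S b)).
    + destruct (Nat.eq_dec a (S b)). subst. rewrite sum_n_n. apply (is_lim_seq_ext (u (S b))). intros; rewrite sum_n_n; auto. apply H; lia.
      rewrite sSm by lia. apply (is_lim_seq_ext (fun K => sum_n_m (fun i => u i K) a b + u (S b) K)).
      intros; rewrite sSm by lia; auto.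
      apply (is_lim_seq_plus' _ _ (sum_n_m l a b) (l (S b))). apply IHb; intros; apply H; lia. apply H; lia.
    + rewrite sZ by lia. apply (is_lim_seq_ext (fun _ => 0)). intros; rewrite sZ; lia || auto. apply is_lim_seq_const.
Qed.


Definition M (k:nat) : R := 2 * INR k - 1.

Lemma M_ge1 k : (1 <= k)%nat -> 1 <= M k.
Proof. intros; unfold M. apply le_INR in H. simpl in H. lra. Qed.

Lemma M_ge_k k : (1 <= k)%nat -> INR k <= M k.
Proof. intros; unfold M. apply le_INR in H. simpl in H. lra. Qed.

Lemma INR_M k : (1 <= k)%nat -> INR (2*k-1) = M k.
Proof. intros; unfold M. rewrite minus_INR by lia. rewrite mult_INR. simpl. lra. Qed.

Lemma tele (v : nat -> R) a b : (a <= b)%nat -> sum_n_m (fun i => v i - v (S i)) a b = v a - v (S b).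
Proof.
  intros Hab. induction b.
  - assert (a = 0%nat) by lia; subst. rewrite sum_n_n. auto.
  - destruct (Nat.eq_dec a (S b)). subst; rewrite sum_n_n; auto.
    rewrite sSm by lia. rewrite IHb by lia. lra.
Qed.

Lemma T_tele p N m : N <> 0 -> m <> 0 ->
  sum_n_m (fun i => / m ^ i / N ^ (p+3-i)) 1 (p+1) * (m - N) = / N^(p+2) - / (m^(p+1) * N).
Proof.
  intros HN Hm. rewrite <- sMr.
  rewrite (sExt _ (fun i => (fun i => / m^(i-1) / N^(p+3-i)) i - (fun i => / m^(i-1) / N^(p+3-i)) (S i))).
  - rewrite tele by lia. simpl (1-1)%nat. replace (p+3-1)%nat with (p+2)%nat by lia.
    replace (S (p+1) - 1)%nat with (p+1)%nat by lia. replace (p+3 - S (p+1))%nat with 1%nat by lia.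
    simpl pow at 1. rewrite pow_1. assert (m^(p+1) <> 0) by (apply pow_nonzero; auto). assert (N^(p+2) <> 0) by (apply pow_nonzero; auto). field; tauto.
  - intros i Hi. destruct i as [|j]. lia.
    replace (p+3-S j)%nat with (S (S (p-j))) by lia. replace (S j - 1)%nat with j by lia.
    replace (S (S j) - 1)%nat with (S j) by lia. replace (p + 3 - S (S j))%nat with (S (p-j)) by lia.
    simpl. assert (m^j <> 0) by (apply pow_nonzero; auto). assert (N^(p-j) <> 0) by (apply pow_nonzero; auto).
    field. tauto.
Qed.


Definition T p n k := sum_n_m (fun i => / M k ^ i / INR n ^ (p+3-i)) 1 (p+1).
Definition dd p n k := if Nat.eqb n (2*k-1) then (INR p + 2) / INR n ^ (p+3) else 0.
Definition ee p n k := if Nat.eqb n (2*k-1) then 0 else / INR n ^ (p+2) / (M k - INR n).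
Definition hh n k := (if Nat.eqb n (2*k-1) then 0 else / (INR n - M k)) - / INR n.
Definition g p k := / M k ^ (p+2).

Lemma Tid p n k : (1 <= n)%nat -> (1 <= k)%nat -> T p n k = dd p n k + ee p n k + g p k * hh n k.
Proof.
  intros Hn Hk. unfold T, dd, ee, hh, g.
  assert (HN : 0 < INR n) by (apply lt_0_INR; lia).
  assert (Hm := M_ge1 k Hk).
  destruct (Nat.eqb_spec n (2*k-1)) as [E|E].
  - assert (E' : M k = INR n) by (rewrite E; rewrite INR_M; auto).
    rewrite E'. rewrite (sExt _ (fun _ => / INR n ^ (p+3))).
    + rewrite sum_n_m_const. replace (S (p+1) - 1)%nat with (S p) by lia. rewrite S_INR.
      replace (p+3)%nat with (S (p+2)) by lia. simpl pow.
      assert (INR n ^ (p+2) <> 0) by (apply pow_nonzero; lra). fixeq. field. lra.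
    + intros i Hi. replace (p+3)%nat with (i + (p+3-i))%nat at 2 by lia. rewrite pow_add.
      assert (INR n ^ i <> 0) by (apply pow_nonzero; lra). assert (INR n ^ (p+3-i) <> 0) by (apply pow_nonzero; lra).
      field. tauto.
  - assert (E' : M k <> INR n). { intro C. apply E. apply INR_eq. rewrite INR_M; auto. }
    assert (D : M k - INR n <> 0) by lra.
    assert (Ht := T_tele p (INR n) (M k) ltac:(lra) ltac:(lra)).
    set (S0 := sum_n_m _ 1 (p+1)) in *.
    replace S0 with ((/ INR n ^ (p + 2) - / (M k ^ (p + 1) * INR n)) / (M k - INR n)) by (rewrite <- Ht; field; auto).
    replace (p+2)%nat with (S (p+1)) by lia. simpl pow.
    assert (INR n ^ (p+1) <> 0) by (apply pow_nonzero; lra). assert (M k ^ (p+1) <> 0) by (apply pow_nonzero; lra).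
    fixeq. field. repeat split; lra.
Qed.

Lemma ee_sum p n : (1 <= n)%nat -> sum_n_m (ee p n) 1 n = 0.
Proof.
  intros Hn. set (S0 := sum_n_m (ee p n) 1 n).
  assert (S0 = - S0).
  { unfold S0 at 1. rewrite sRev1. rewrite <- (Rmult_1_l S0). replace (- (1 * S0)) with ((-1) * S0) by ring.
    unfold S0. rewrite <- sMl. apply sExt. intros k Hk. unfold ee.
    destruct (Nat.eqb_spec n (2 * (S n - k) - 1)); destruct (Nat.eqb_spec n (2*k-1)); try lia.
    - ring.
    - replace (M (S n - k) - INR n) with (-(M k - INR n)) by (unfold M; rewrite minus_INR by lia; rewrite S_INR; lra).
      assert (M k - INR n <> 0). { intro C. apply n1. apply INR_eq. rewrite INR_M by lia. lra. }
      field. split; auto. apply pow_nonzero. apply not_0_INR. lia. }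
  fixeq. lra.
Qed.

Definition D p n := if Nat.even n then 0 else (INR p + 2) / INR n ^ (p+3).

Lemma dd_sum p n : (1 <= n)%nat -> sum_n_m (dd p n) 1 n = D p n.
Proof.
  intros Hn. unfold D. destruct (Nat.even n) eqn:Ev.
  - apply Nat.even_spec in Ev. destruct Ev as [t Ht]. apply s0. intros k Hk. unfold dd.
    destruct (Nat.eqb_spec n (2*k-1)); [lia|auto].
  - assert (Od : Nat.odd n = true) by (unfold Nat.odd; rewrite Ev; auto).
    apply Nat.odd_spec in Od. destruct Od as [t Ht].
    rewrite (sPoint _ 1 n (S t)); [| lia | intros k Hk Hkt; unfold dd; destruct (Nat.eqb_spec n (2*k-1)); [lia|auto]].
    unfold dd. destruct (Nat.eqb_spec n (2 * S t - 1)); [auto|lia].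
Qed.

Definition A p n := sum_n_m (fun i => S_odd i n / INR n ^ (p+3-i)) 1 (p+1).
Definition c N k := sum_n_m (fun n => hh n k) k N.

Lemma A_eq p n : (1 <= n)%nat -> A p n = D p n + sum_n_m (fun k => g p k * hh n k) 1 n.
Proof.
  intros Hn. unfold A, S_odd.
  rewrite (sExt _ (fun i => sum_n_m (fun k => / M k ^ i / INR n ^ (p+3-i)) 1 n)).
  2:{ intros i Hi. unfold Rdiv. rewrite <- sMr. reflexivity. }
  rewrite sSwap. fold (T p n).
  rewrite (sExt (T p n) (fun k => (dd p n k + ee p n k) + g p k * hh n k)) by (intros; apply Tid; lia).
  rewrite sPlus. rewrite sPlus. rewrite ee_sum, dd_sum by auto. fixeq. ring.
Qed.

Lemma F_eq p N : sum_n_m (A p) 1 N = sum_n_m (D p) 1 N + sum_n_m (fun k => g p k * c N k) 1 N.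
Proof.
  rewrite (sExt (A p) (fun n => D p n + sum_n_m (fun k => g p k * hh n k) 1 n)) by (intros; apply A_eq; lia).
  rewrite sPlus. f_equal. rewrite sTri. apply sExt. intros. unfold c. rewrite sMl. auto.
Qed.



Definition H (j : nat) : R := sum_n_m (fun i => / INR i) 1 j.

Lemma H_0 : H 0 = 0.
Proof. unfold H. apply sZ. lia. Qed.

Lemma H_S j : H (S j) = H j + / INR (S j).
Proof. unfold H. rewrite sSm by lia. auto. Qed.

Lemma H_nonneg j : 0 <= H j.
Proof. induction j. rewrite H_0; lra. rewrite H_S. assert (0 < / INR (S j)) by (apply Rinv_0_lt_compat, lt_0_INR; lia). lra. Qed.

Lemma H_mono a b : (a <= b)%nat -> H a <= H b.
Proof.
  intros Hab. induction b. replace a with 0%nat by lia; lra.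
  destruct (Nat.eq_dec a (S b)). subst; lra.
  rewrite H_S. assert (0 < / INR (S b)) by (apply Rinv_0_lt_compat, lt_0_INR; lia). assert (H a <= H b) by (apply IHb; lia). lra.
Qed.

Lemma H_diff a b : H (a + b) - H a <= INR b / INR (S a).
Proof.
  induction b. rewrite Nat.add_0_r. unfold Rdiv; simpl; lra.
  replace (a + S b)%nat with (S (a+b)) by lia. rewrite H_S, (S_INR b).
  assert (/ INR (S (a+b)) <= / INR (S a)).
  { apply Rinv_le_contravar. apply lt_0_INR; lia. apply le_INR; lia. }
  unfold Rdiv in *. rewrite Rmult_plus_distr_r, Rmult_1_l. lra.
Qed.

Lemma H_le j : H j <= INR j.
Proof.
  induction j. rewrite H_0; simpl; lra. rewrite H_S.
  assert (/ INR (S j) <= 1). { rewrite <- Rinv_1. apply Rinv_le_contravar. lra. rewrite S_INR. pose proof (pos_INR j). lra. }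
  rewrite S_INR in *. lra.
Qed.

Lemma H_sq j : H j * H j <= 4 * INR j.
Proof.
  induction j. rewrite H_0; simpl; lra. rewrite H_S.
  assert (P : 0 < INR (S j)) by (apply lt_0_INR; lia).
  assert (HI : / INR (S j) <= 1). { rewrite <- Rinv_1. apply Rinv_le_contravar. lra. rewrite S_INR. pose proof (pos_INR j). lra. }
  assert (HI0 : 0 < / INR (S j)) by (apply Rinv_0_lt_compat; auto).
  assert (Hk : H j * / INR (S j) <= 1).
  { pose proof (H_le j). rewrite S_INR in *. apply Rmult_le_reg_r with (INR j + 1). lra.
    rewrite Rmult_assoc, Rinv_l by lra. pose proof (H_nonneg j). lra. }
  replace (4 * INR (S j)) with (4 * INR j + 4) by (rewrite S_INR; ring). assert (/ INR (S j) * / INR (S j) <= 1) by nra. nra.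
Qed.

Definition cf N k := (if Nat.leb (2*k-1) N then H (N - (2*k-1)) else H (2*k-1 - N - 1)) - H N.

Lemma c_closed k j : (1 <= k)%nat -> c (k+j) k = cf (k+j) k.
Proof.
  intros Hk. induction j.
  - rewrite Nat.add_0_r. unfold c, cf. rewrite sum_n_n. unfold hh.
    destruct (Nat.eq_dec k 1).
    + subst. simpl. rewrite H_0. unfold H. rewrite sum_n_n. simpl. lra.
    + destruct k as [|[|k']]; try lia.
      destruct (Nat.eqb_spec (S (S k')) (2 * S (S k') - 1)); try lia.
      destruct (Nat.leb_spec (2 * S (S k') - 1) (S (S k'))); try lia.
      replace (2 * S (S k') - 1 - S (S k') - 1)%nat with k' by lia.
      rewrite !H_S. unfold M. rewrite !S_INR.
      assert (0 <= INR k') by apply pos_INR.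
      fixeq. field. lra.
  - replace (k + S j)%nat with (S (k+j)) by lia. unfold c in *. rewrite sSm by lia. rewrite IHj.
    unfold cf, hh. set (N := (k+j)%nat) in *.
    assert (HM := INR_M k Hk).
    destruct (Nat.leb_spec (2*k-1) N); destruct (Nat.leb_spec (2*k-1) (S N)); try lia;
    destruct (Nat.eqb_spec (S N) (2*k-1)); try lia.
    + replace (S N - (2*k-1))%nat with (S (N - (2*k-1))) by lia. rewrite !H_S.
      replace (INR (S (N - (2*k-1)))) with (INR (S N) - M k).
      2:{ rewrite <- HM. rewrite !S_INR. rewrite (minus_INR N (2*k-1)) by lia. ring. }
      assert (INR (S N) - M k <> 0) by (rewrite <- HM; intro C; assert (C2 : INR (S N) = INR (2*k-1)) by lra; apply INR_eq in C2; lia).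
      assert (INR (S N) <> 0) by (apply not_0_INR; lia).
      fixeq. field. split; auto.
    + rewrite e. replace (2*k-1 - N - 1)%nat with 0%nat by lia. replace (2*k-1 - (2*k-1))%nat with 0%nat by lia.
      rewrite <- e. rewrite H_S. fixeq. lra.
    + replace (2*k-1 - N - 1)%nat with (S (2*k-1 - S N - 1)) by lia. rewrite !H_S.
      replace (INR (S (2 * k - 1 - S N - 1))) with (M k - INR (S N)).
      2:{ rewrite <- HM. rewrite !S_INR. rewrite !minus_INR by lia. rewrite ?S_INR. simpl. lra. }
      assert (M k - INR (S N) <> 0) by (rewrite <- HM; intro C; assert (C2 : INR (S N) = INR (2*k-1)) by lra; apply INR_eq in C2; lia).
      assert (INR (S N) <> 0) by (apply not_0_INR; lia).
      fixeq. field. split; auto. lra.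
Qed.


Lemma L1 G X m kk N Hn : 1 <= kk <= m -> 1 <= N -> 0 < G <= / (m*m) -> 0 <= X -> 0 <= Hn ->
  (X <= 2*m/N \/ (X <= Hn /\ N <= 2*m)) -> G*X <= 2/(kk*N) + 4*Hn/(N*N).
Proof.
  intros Hk HN HG HX HH Hc.
  assert (P1 : 0 <= 2 / (kk*N)) by (apply Rlt_le; apply Rdiv_lt_0_compat; nra).
  assert (P2 : 0 <= 4*Hn/(N*N)) by (apply Rmult_le_pos; [lra| apply Rlt_le, Rinv_0_lt_compat; nra]).
  apply Rle_trans with (/(m*m) * X). apply Rmult_le_compat_r; lra.
  destruct Hc as [Hc|[Hc Hc2]].
  - apply Rle_trans with (/(m*m) * (2*m/N)). apply Rmult_le_compat_l. apply Rlt_le, Rinv_0_lt_compat; nra. auto.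
    replace (/(m*m) * (2*m/N)) with (2 / (m*N)) by (field; lra).
    apply Rle_trans with (2/(kk*N)); [|lra].
    unfold Rdiv. apply Rmult_le_compat_l. lra. apply Rinv_le_contravar. nra. nra.
  - apply Rle_trans with (/(m*m) * Hn). apply Rmult_le_compat_l. apply Rlt_le, Rinv_0_lt_compat; nra. auto.
    apply Rle_trans with (4*Hn/(N*N)); [|lra].
    replace (4*Hn/(N*N)) with (/((N*N)/4) * Hn) by (field; lra).
    apply Rmult_le_compat_r. auto. apply Rinv_le_contravar. nra. nra.
Qed.

Lemma g_bounds p k : (1 <= k)%nat -> 0 < g p k <= / (M k * M k).
Proof.
  intros Hk. assert (Hm := M_ge1 k Hk). unfold g. split.
  - apply Rinv_0_lt_compat, pow_lt; lra.
  - apply Rinv_le_contravar. nra. replace (M k * M k) with (M k ^ 2) by ring. apply Rle_pow; auto. lia.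
Qed.

Lemma gbound p k N : (1 <= k <= N)%nat ->
  0 <= g p k * (- c N k) <= 2/(INR k * INR N) + 4 * H N / (INR N * INR N).
Proof.
  intros Hk. replace N with (k + (N - k))%nat by lia. rewrite c_closed by lia.
  replace (k + (N - k))%nat with N by lia.
  assert (Hg := g_bounds p k ltac:(lia)). assert (Hm := M_ge1 k ltac:(lia)).
  assert (HMk := M_ge_k k ltac:(lia)). assert (HM := INR_M k ltac:(lia)).
  assert (HN : 1 <= INR N) by (replace 1 with (INR 1) by auto; apply le_INR; lia).
  assert (HkI : 1 <= INR k) by (replace 1 with (INR 1) by auto; apply le_INR; lia).
  assert (HH := H_nonneg N).
  unfold cf. destruct (Nat.leb_spec (2*k-1) N) as [Hle|Hlt].
  - assert (X0 : 0 <= - (H (N - (2*k-1)) - H N)) by (pose proof (H_mono (N - (2*k-1)) N ltac:(lia)); lra).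
    split. apply Rmult_le_pos; lra.
    apply L1 with (M k); auto; try lra.
    destruct (le_lt_dec (2*(2*k-1)) (N+1)).
    + left. pose proof (H_diff (N - (2*k-1)) (2*k-1)) as D1. replace (N - (2*k-1) + (2*k-1))%nat with N in D1 by lia.
      rewrite HM in D1. rewrite S_INR, minus_INR in D1 by lia. rewrite HM in D1.
      apply le_INR in l. rewrite mult_INR, plus_INR, HM in l. simpl in l.
      apply Rle_trans with (M k / (INR N - M k + 1)). lra.
      replace (2 * M k / INR N) with (M k * / (INR N / 2)) by (field; lra).
      unfold Rdiv. apply Rmult_le_compat_l. lra.
      apply Rinv_le_contravar; lra.
    + right. split. pose proof (H_nonneg (N - (2*k-1))). lra.
      apply lt_INR in l. rewrite mult_INR, plus_INR, HM in l. simpl in l. lra.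
  - assert (X0 : 0 <= - (H (2*k-1 - N - 1) - H N)) by (pose proof (H_mono (2*k-1 - N - 1) N ltac:(lia)); lra).
    split. apply Rmult_le_pos; lra.
    apply L1 with (M k); auto; try lra.
    right. split. pose proof (H_nonneg (2*k-1 - N - 1)). lra.
    apply lt_INR in Hlt. rewrite HM in Hlt. lra.
Qed.


Definition E p N := sum_n_m (fun k => g p k * c N k) 1 N.

Lemma E_bound p N : (1 <= N)%nat -> 0 <= - E p N <= 6 * H N / INR N.
Proof.
  intros HN. assert (HNr : 1 <= INR N) by (replace 1 with (INR 1) by auto; apply le_INR; lia).
  unfold E. replace (- sum_n_m (fun k => g p k * c N k) 1 N) with (sum_n_m (fun k => g p k * (- c N k)) 1 N).
  2:{ rewrite <- (Rmult_1_l (sum_n_m (fun k => g p k * c N k) 1 N)). rewrite Ropp_mult_distr_l. rewrite <- sMl. apply sExt; intros; ring. }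
  split.
  - apply sNonneg. intros k Hk. apply (gbound p k N Hk).
  - apply Rle_trans with (sum_n_m (fun k => (2 / INR N) * / INR k + 4 * H N / (INR N * INR N)) 1 N).
    + apply sLe. intros k Hk. replace (2 / INR N * / INR k) with (2 / (INR k * INR N)).
      apply (proj2 (gbound p k N Hk)). field. split. apply not_0_INR; lia. lra.
    + rewrite sPlus, sMl, sum_n_m_const. fold (H N). replace (S N - 1)%nat with N by lia.
      right. field. lra.
Qed.

Lemma Hratio_lim : is_lim_seq (fun K => H (S K) / INR (S K)) 0.
Proof.
  apply is_lim_seq_Reals. intros eps Heps.
  destruct (archimed_cor1 (eps*eps/4)) as [N0 [HN0 HN0p]]. nra.
  exists N0. intros n Hn. unfold R_dist. rewrite Rminus_0_r.
  assert (Hn1 : 0 < INR (S n)) by (apply lt_0_INR; lia).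
  assert (HN0r : 0 < INR N0) by (apply lt_0_INR; lia).
  assert (Hle : INR N0 <= INR (S n)) by (apply le_INR; lia).
  pose proof (H_sq (S n)) as Q. pose proof (H_nonneg (S n)) as Q0.
  set (x := H (S n) / INR (S n)).
  assert (x0 : 0 <= x) by (unfold x; apply Rmult_le_pos; [auto| apply Rlt_le, Rinv_0_lt_compat; auto]).
  rewrite Rabs_pos_eq by auto.
  assert (xx : x * x <= 4 / INR (S n)).
  { unfold x. replace (H (S n) / INR (S n) * (H (S n) / INR (S n))) with ((H (S n) * H (S n)) / (INR (S n) * INR (S n))) by (field; lra).
    replace (4 / INR (S n)) with ((4 * INR (S n)) / (INR (S n) * INR (S n))) by (field; lra).
    unfold Rdiv. apply Rmult_le_compat_r. apply Rlt_le, Rinv_0_lt_compat; nra. auto. }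
  assert (4 / INR (S n) <= 4 / INR N0).
  { unfold Rdiv. apply Rmult_le_compat_l. lra. apply Rinv_le_contravar; auto. }
  assert (4 / INR N0 < eps * eps) by (unfold Rdiv; lra).
  nra.
Qed.

Lemma E_lim p : is_lim_seq (fun K => E p (S K)) 0.
Proof.
  apply is_lim_seq_abs_0.
  apply is_lim_seq_le_le with (fun _ => 0) (fun K => 6 * (H (S K) / INR (S K))).
  - intros K. pose proof (E_bound p (S K) ltac:(lia)). split. apply Rabs_pos.
    rewrite Rabs_left1 by lra. unfold Rdiv in *. lra.
  - apply is_lim_seq_const.
  - replace (Finite 0) with (Rbar_mult 6 0) by (simpl; f_equal; ring).
    apply is_lim_seq_scal_l. apply Hratio_lim.
Qed.



Definition lamt p (j : nat) : R := / (2 * INR (S j) - 1) ^ (p+3).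

Lemma lamt_pos p j : 0 < lamt p j.
Proof. unfold lamt. apply Rinv_0_lt_compat, pow_lt. rewrite S_INR. pose proof (pos_INR j). lra. Qed.

Lemma lamt_bound p J : sum_n (lamt p) J <= 2 - / (INR J + 1).
Proof.
  unfold sum_n. induction J.
  - rewrite sum_n_n. unfold lamt. replace (2 * INR 1 - 1) with 1 by (simpl; lra). rewrite pow1. simpl. lra.
  - rewrite sSm by lia. rewrite S_INR.
    assert (lamt p (S J) <= / (INR J + 1) - / (INR J + 1 + 1)).
    { unfold lamt. pose proof (pos_INR J). rewrite !S_INR.
      apply Rle_trans with (/ (2 * (INR J + 1 + 1) - 1) ^ 2).
      - apply Rinv_le_contravar. apply pow_lt; lra. apply Rle_pow. lra. lia.
      - replace (/ (INR J + 1) - / (INR J + 1 + 1)) with (/ ((INR J + 1) * (INR J + 1 + 1))) by (field; lra).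
        apply Rinv_le_contravar. nra. nra. }
    lra.
Qed.

Lemma lamt_lim p : is_lim_seq (sum_n (lamt p)) (lambda (p+3)).
Proof.
  destruct (ex_finite_lim_seq_incr (sum_n (lamt p)) 2) as [l Hl].
  - intros n. unfold sum_n. rewrite sSm by lia. pose proof (lamt_pos p (S n)). lra.
  - intros n. pose proof (lamt_bound p n). assert (0 < / (INR n + 1)) by (apply Rinv_0_lt_compat; pose proof (pos_INR n); lra). lra.
  - replace (lambda (p+3)) with l. auto. unfold lambda, Series. fold (lamt p). rewrite (is_lim_seq_unique _ _ Hl). auto.
Qed.

Lemma even_double J : Nat.even (2*J) = true.
Proof. induction J. auto. replace (2 * S J)%nat with (S (S (2*J))) by lia. simpl. auto. Qed.

Lemma Dsum_eq p J : sum_n_m (D p) 1 (S (2*J)) = (INR p + 2) * sum_n (lamt p) J /\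
                    sum_n_m (D p) 1 (S (S (2*J))) = (INR p + 2) * sum_n (lamt p) J.
Proof.
  assert (step : forall J, sum_n_m (D p) 1 (S (S (2*J))) = sum_n_m (D p) 1 (S (2*J))).
  { intros J0. rewrite sSm by lia. unfold D at 2. replace (S (S (2*J0))) with (2 * S J0)%nat by lia. rewrite even_double. lra. }
  induction J.
  - unfold sum_n. rewrite (sum_n_n (lamt p)). unfold lamt. replace (2 * INR 1 - 1) with 1 by (simpl; lra). rewrite pow1.
    split.
    + simpl. rewrite sum_n_n. unfold D. simpl. rewrite pow1. fixeq. field.
    + simpl. rewrite sSm by lia. rewrite sum_n_n. unfold D. simpl. rewrite pow1. fixeq. field.
  - assert (E1 : sum_n_m (D p) 1 (S (2 * S J)) = (INR p + 2) * sum_n (lamt p) (S J)).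
    { replace (S (2 * S J)) with (S (S (S (2*J)))) by lia. rewrite sSm by lia. rewrite (proj2 IHJ).
      unfold sum_n. rewrite sSm by lia. unfold D.
      replace (Nat.even (S (S (S (2*J))))) with false.
      2:{ change (false = Nat.even (S (2*J))). rewrite Nat.even_succ, <- Nat.negb_even, even_double. auto. }
      unfold lamt. replace (INR (S (S (S (2*J))))) with (2 * INR (S (S J)) - 1).
      2:{ rewrite !S_INR, mult_INR. simpl. ring. }
      rewrite Rmult_plus_distr_l. unfold Rdiv. reflexivity. }
    split. auto. rewrite step. auto.
Qed.


Lemma div2_ev : filterlim Nat.div2 eventually eventually.
Proof.
  intros P [N HN]. exists (2*N)%nat. intros n Hn. apply HN. apply Nat.div2_le_lower_bound. lia.
Qed.

Lemma Dlim p : is_lim_seq (fun K => sum_n_m (D p) 1 (S K)) ((INR p + 2) * lambda (p+3)).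
Proof.
  apply is_lim_seq_ext with (fun K => (INR p + 2) * sum_n (lamt p) (Nat.div2 K)).
  - intros K. destruct (Nat.Even_or_Odd K) as [[J HJ]|[J HJ]]; subst.
    + rewrite Nat.div2_double. symmetry. apply (proj1 (Dsum_eq p J)).
    + replace (2*J+1)%nat with (S (2*J)) by lia. rewrite Nat.div2_succ_double. symmetry. apply (proj2 (Dsum_eq p J)).
  - apply (is_lim_seq_scal_l _ (INR p + 2) (lambda (p+3))). apply (is_lim_seq_subseq (sum_n (lamt p))). apply div2_ev. apply lamt_lim.
Qed.

Lemma Flim p : is_lim_seq (fun K => sum_n_m (A p) 1 (S K)) ((INR p + 2) * lambda (p+3)).
Proof.
  apply is_lim_seq_ext with (fun K => sum_n_m (D p) 1 (S K) + E p (S K)).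
  - intros K. rewrite F_eq. auto.
  - replace (Finite ((INR p + 2) * lambda (p+3))) with (Rbar_plus ((INR p + 2) * lambda (p+3)) 0) by (simpl; f_equal; ring).
    apply is_lim_seq_plus'. apply Dlim. apply E_lim.
Qed.

Lemma S_odd_nonneg i n : 0 <= S_odd i n.
Proof.
  unfold S_odd. apply sNonneg. intros k Hk. apply Rlt_le, Rinv_0_lt_compat, pow_lt.
  fold (M k). pose proof (M_ge1 k ltac:(lia)). lra.
Qed.

Theorem mainTheorem1 (w : nat) (hw : (3 <= w)%nat) :
  sum_n_m (fun i => sigma_odd (w - i)%nat i) 1 (w - 2)%nat = INR (w - 1)%nat * lambda w.
Proof.
  destruct (Nat.le_exists_sub 3 w hw) as [p [Hp _]]. subst w.
  replace (p + 3 - 2)%nat with (p+1)%nat by lia. replace (p + 3 - 1)%nat with (S (S p)) by lia.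
  rewrite !S_INR. replace (INR p + 1 + 1) with (INR p + 2) by ring.
  set (a := fun i N => S_odd i (S N) / INR (S N) ^ (p + 3 - i)).
  set (L := (INR p + 2) * lambda (p+3)).
  assert (Hpart : forall K, sum_n_m (fun i => sum_n (a i) K) 1 (p+1) = sum_n_m (A p) 1 (S K)).
  { intros K. unfold sum_n. rewrite sSwap. rewrite <- sum_n_m_S. apply sExt. intros. reflexivity. }
  assert (Ha : forall i N, 0 <= a i N).
  { intros i N. unfold a. apply Rmult_le_pos. apply S_odd_nonneg. apply Rlt_le, Rinv_0_lt_compat, pow_lt, lt_0_INR. lia. }
  assert (Hinc : forall K, sum_n_m (A p) 1 (S K) <= sum_n_m (A p) 1 (S (S K))).
  { intros K. rewrite <- !Hpart. apply sLe. intros i Hi. unfold sum_n. rewrite (sSm (a i) 0 K) by lia. pose proof (Ha i (S K)). lra. }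
  assert (HleL : forall K, sum_n_m (A p) 1 (S K) <= L).
  { intros K. apply (is_lim_seq_incr_compare (fun K => sum_n_m (A p) 1 (S K)) L (Flim p) Hinc). }
  assert (Hser : forall i, (1 <= i <= p+1)%nat -> is_lim_seq (fun K => sum_n (a i) K) (sigma_odd (p + 3 - i) i)).
  { intros i Hi. destruct (ex_finite_lim_seq_incr (sum_n (a i)) L) as [l Hl].
    - intros n. unfold sum_n. rewrite sSm by lia. pose proof (Ha i (S n)). lra.
    - intros n. apply Rle_trans with (sum_n_m (fun i => sum_n (a i) n) 1 (p+1)).
      + apply (sPointLe (fun i => sum_n (a i) n) 1 (p+1) i Hi). intros j Hj. unfold sum_n. apply sNonneg. intros; apply Ha.
      + rewrite Hpart. apply HleL.
    - replace (sigma_odd (p+3-i) i) with l. auto. unfold sigma_odd, Series. fold (a i). change (fun n => a i n) with (a i).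
      rewrite (is_lim_seq_unique _ _ Hl). auto. }
  assert (H1 := sLim (fun i K => sum_n (a i) K) (fun i => sigma_odd (p+3-i) i) 1 (p+1) Hser).
  assert (H2 : is_lim_seq (fun K => sum_n_m (fun i => sum_n (a i) K) 1 (p+1)) L).
  { apply is_lim_seq_ext with (fun K => sum_n_m (A p) 1 (S K)). intros; rewrite Hpart; auto. apply Flim. }
  apply is_lim_seq_unique in H1. apply is_lim_seq_unique in H2. rewrite H1 in H2. injection H2. auto.
Qed.
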